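(* Suppose that $A \in (\mathbb{S}_{\max})^{n \times n}$, let $\gamma$ be a $\mathbb{S}_{\max}$-eigenvalue of $A$ and denote $B=\gamma I \ominus A$. Then \[ A \, B^{\mathrm{adj}} \,\nabla\, \gamma B^{\mathrm{adj}} \enspace. \]
   Context: $\mathbb{S}_{\max}$ is the symmetrized tropical semiring over a divisible totally ordered abelian group, with zero $\mathbf{0}$, unit $\mathbf{1}$, minus $\ominus$; $\mathbb{S}_{\max}^\vee$ is the set of signed elements (positive, negative, or $\mathbf{0}$). The balance relation is $a\,\nabla\, b$ iff $a\ominus b$ is balanced (of the form $c\ominus c$), applied entrywise to matrices. $\det(A)=\bigoplus_\pi\mathrm{sgn}(\pi)\prod_i a_{i\pi(i)}$ with $\mathrm{sgn}(\pi)\in\{\mathbf{1},\ominus\mathbf{1}\}$; $(B^{\mathrm{adj}})_{ij}=(\ominus\mathbf{1})^{i+j}\det B[\hat j,\hat i]$, where $B[\hat j,\hat i]$ is $B$ with row $j$ and column $i$ removed. An $\mathbb{S}_{\max}$-eigenvalue of $A$ is a $\gamma\in\mathbb{S}_{\max}^\vee$ with $\det(\gamma I\ominus A)\,\nabla\,\mathbf{0}$. *)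

(* Defs.v *)
From mathcomp Require Import all_boot all_order all_algebra all_fingroup.
Set Implicit Arguments. Unset Strict Implicit. Unset Printing Implicit Defensive.
Import GRing.Theory.
Local Open Scope ring_scope.

Record doag := DOAG {
  dcar : zmodType;
  dle : rel dcar;
  dle_refl : forall a, dle a a;
  dle_anti : forall a b, dle a b -> dle b a -> a = b;
  dle_trans : forall a b c, dle a b -> dle b c -> dle a c;
  dle_total : forall a b, dle a b || dle b a;
  dle_add : forall a b c, dle a b -> dle (a + c) (b + c);
  ddivisible : forall (k : nat) (a : dcar), exists b : dcar, b *+ k.+1 = a
}.

(* Elements of S_max: zero, positive (+)a, negative (-)a, balanced a^• ,
   where a in the group is the modulus (tropical "value"). *)
Inductive smax (G : doag) : Type :=
| SZero | SPos of dcar G | SNeg of dcar G | SBal of dcar G.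
Arguments SZero {G}.

Section Smax.
Variable G : doag.
Local Notation S := (smax G).

Definition dlt (a b : dcar G) := dle a b && ~~ dle b a.

Definition sadd (x y : S) : S :=
  match x, y with
  | SZero, _ => y
  | _, SZero => x
  | SPos a, SPos b => if dlt a b then y else if dlt b a then x else SPos a
  | SNeg a, SNeg b => if dlt a b then y else if dlt b a then x else SNeg a
  | SPos a, SNeg b | SNeg a, SPos b | SPos a, SBal b | SNeg a, SBal b
  | SBal a, SPos b | SBal a, SNeg b | SBal a, SBal b =>
      if dlt a b then y else if dlt b a then x else SBal a
  end.

Definition smul (x y : S) : S :=
  match x, y with
  | SZero, _ | _, SZero => SZero
  | SPos a, SPos b | SNeg a, SNeg b => SPos (a + b)
  | SPos a, SNeg b | SNeg a, SPos b => SNeg (a + b)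
  | SBal a, SPos b | SBal a, SNeg b | SBal a, SBal b
  | SPos a, SBal b | SNeg a, SBal b => SBal (a + b)
  end.

Definition sopp (x : S) : S :=
  match x with SPos a => SNeg a | SNeg a => SPos a | _ => x end.

Definition sone : S := SPos 0.

Definition ssigned (x : S) : bool := if x is SBal _ then false else true.

Definition sbalanced (x : S) : Prop := exists c : S, x = sadd c (sopp c).

Definition snabla (x y : S) : Prop := sbalanced (sadd x (sopp y)).

Definition mxnabla m n (A B : 'M[S]_(m, n)) : Prop :=
  forall i j, snabla (A i j) (B i j).

Definition ssign_perm n (s : 'S_n) : S := if odd_perm s then sopp sone else sone.

Definition sdet n (A : 'M[S]_n) : S :=
  \big[sadd/SZero]_(s : 'S_n) smul (ssign_perm s) (\big[smul/sone]_(i < n) A i (s i)).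

Definition ssign_nat (k : nat) : S := if odd k then sopp sone else sone.

Definition sadj n (B : 'M[S]_n) : 'M[S]_n :=
  \matrix_(i, j) smul (ssign_nat (i + j)) (sdet (row' j (col' i B))).

Definition smulmx m n p (A : 'M[S]_(m, n)) (B : 'M[S]_(n, p)) : 'M[S]_(m, p) :=
  \matrix_(i, j) \big[sadd/SZero]_(k < n) smul (A i k) (B k j).

Definition sscalemx m n (c : S) (A : 'M[S]_(m, n)) : 'M[S]_(m, n) :=
  \matrix_(i, j) smul c (A i j).

Definition sidmx n : 'M[S]_n := \matrix_(i, j) if i == j then sone else SZero.

Definition ssubmx m n (A B : 'M[S]_(m, n)) : 'M[S]_(m, n) :=
  \matrix_(i, j) sadd (A i j) (sopp (B i j)).

Definition s_eigenvalue n (A : 'M[S]_n) (g : S) : Prop :=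
  ssigned g /\ snabla (sdet (ssubmx (sscalemx g (sidmx n)) A)) SZero.

End Smax.
Arguments sidmx {G} n.

(* Main.v *)
Require Import Defs.
From HB Require Import structures.
From mathcomp Require Import all_boot all_order all_algebra all_fingroup.
Set Implicit Arguments. Unset Strict Implicit. Unset Printing Implicit Defensive.
Import GRing.Theory.
Local Open Scope ring_scope.

Section Alg.
Variable G : doag.
Local Notation S := (smax G).
Local Notation dle := (dle (d:=G)).

Lemma dltxx (a : dcar G) : dlt a a = false.
Proof. by rewrite /dlt dle_refl. Qed.

Lemma dlt_trans (a b c : dcar G) : dlt a b -> dlt b c -> dlt a c.
Proof.
rewrite /dlt => /andP[ab nba] /andP[bc ncb]; apply/andP; split.
  exact: dle_trans ab bc.
apply/negP => ca; case/negP: nba; exact: dle_trans bc ca.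
Qed.

Variant cmp_spec (a b : dcar G) : bool -> bool -> Prop :=
| CmpLt of dlt a b : cmp_spec a b true false
| CmpEq of a = b : cmp_spec a b false false
| CmpGt of dlt b a : cmp_spec a b false true.

Lemma cmpP a b : cmp_spec a b (dlt a b) (dlt b a).
Proof.
rewrite /dlt; case ab: (dle a b); case ba: (dle b a) => /=.
- by apply: CmpEq; apply: dle_anti.
- by apply: CmpLt; rewrite /dlt ab ba.
- by apply: CmpGt; rewrite /dlt ab ba.
- by have := dle_total a b; rewrite ab ba.
Qed.

Lemma dle_add2l (a b c : dcar G) : dle (a + b) (a + c) = dle b c.
Proof.
apply/idP/idP => h.
  by have := dle_add (- a) h; rewrite ![_ + - a]addrC !addKr.
by have := dle_add a h; rewrite ![_ + a]addrC.
Qed.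

Lemma dlt_add2l (a b c : dcar G) : dlt (a + b) (a + c) = dlt b c.
Proof. by rewrite /dlt !dle_add2l. Qed.

Ltac cmp_all :=
  repeat match goal with
  | |- context [dlt ?a ?a] => rewrite dltxx
  | |- context [dlt ?a ?b] =>
      case: (cmpP a b) => [?|?|?]; subst; simpl
  end.

Ltac contra := exfalso; match goal with
  | H1 : is_true (dlt ?x ?x) |- _ => by rewrite dltxx in H1
  | H1 : is_true (dlt ?x ?y), H2 : is_true (dlt ?y ?x) |- _ => by have := dlt_trans H1 H2; rewrite dltxx
  | H1 : is_true (dlt ?x ?y), H2 : is_true (dlt ?y ?z), H3 : is_true (dlt ?z ?x) |- _ =>
      by have := dlt_trans (dlt_trans H1 H2) H3; rewrite dltxx
  end.

Lemma saddA : associative (@sadd G).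
Proof.
move=> [|a|a|a] [|b|b|b] [|c|c|c] //=; cmp_all => //; try contra.
all: contra.
Qed.


Lemma saddC : commutative (@sadd G).
Proof. move=> [|a|a|a] [|b|b|b] //=; cmp_all => //; try contra. Qed.

Lemma add0s : left_id SZero (@sadd G).
Proof. by case. Qed.

Lemma adds0 (x : S) : sadd x SZero = x.
Proof. by case: x. Qed.

Lemma smulA : associative (@smul G).
Proof. by move=> [|a|a|a] [|b|b|b] [|c|c|c] //=; rewrite addrA. Qed.

Lemma smulC : commutative (@smul G).
Proof. by move=> [|a|a|a] [|b|b|b] //=; rewrite addrC. Qed.

Lemma mul1s : left_id (sone G) (@smul G).
Proof. by move=> [|a|a|a] //=; rewrite add0r. Qed.

Lemma muls1 (x : S) : smul x (sone G) = x.
Proof. by rewrite smulC mul1s. Qed.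

Lemma smul0 (x : S) : smul x SZero = SZero.
Proof. by case: x. Qed.

Lemma smulDr (x y z : S) : smul x (sadd y z) = sadd (smul x y) (smul x z).
Proof.
move: x y z => [|a|a|a] [|b|b|b] [|c|c|c] //=; rewrite ?dlt_add2l; cmp_all => //.
Qed.

Lemma smulDl (x y z : S) : smul (sadd x y) z = sadd (smul x z) (smul y z).
Proof. by rewrite smulC smulDr ![smul z _]smulC. Qed.

Lemma soppD (x y : S) : sopp (sadd x y) = sadd (sopp x) (sopp y).
Proof. move: x y => [|a|a|a] [|b|b|b] //=; cmp_all => //. Qed.

Lemma soppK (x : S) : sopp (sopp x) = x.
Proof. by case: x. Qed.

Lemma smulN (x y : S) : smul (sopp x) y = sopp (smul x y).
Proof. by move: x y => [|a|a|a] [|b|b|b]. Qed.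

Lemma smulNr (x y : S) : smul x (sopp y) = sopp (smul x y).
Proof. by rewrite smulC smulN smulC. Qed.

Lemma smulCA (x y z : S) : smul x (smul y z) = smul y (smul x z).
Proof. by rewrite !smulA (smulC x). Qed.

End Alg.
HB.instance Definition _ (G : doag) :=
  Monoid.isComLaw.Build (smax G) SZero (@sadd G) (@saddA G) (@saddC G) (@add0s G).
HB.instance Definition _ (G : doag) :=
  Monoid.isComLaw.Build (smax G) (sone G) (@smul G) (@smulA G) (@smulC G) (@mul1s G).

Section Det.
Variable G : doag.
Local Notation S := (smax G).
Local Notation sadd := (@sadd G).
Local Notation smul := (@smul G).
Local Notation ssign_perm := (ssign_perm G).
Local Notation ssign_nat := (ssign_nat G).

Lemma smul_sumr (x : S) I (r : seq I) (P : pred I) (F : I -> S) :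
  smul x (\big[sadd/SZero]_(i <- r | P i) F i) = \big[sadd/SZero]_(i <- r | P i) smul x (F i).
Proof. exact: (big_morph (smul x) (smulDr x) (smul0 x)). Qed.

Lemma sopp_sum I (r : seq I) (P : pred I) (F : I -> S) :
  sopp (\big[sadd/SZero]_(i <- r | P i) F i) = \big[sadd/SZero]_(i <- r | P i) sopp (F i).
Proof. exact: (big_morph (@sopp G) (@soppD G) (erefl _)). Qed.

Definition sgnb (b : bool) : S := if b then sopp (sone G) else sone G.

Lemma sgnbM a b : smul (sgnb a) (sgnb b) = sgnb (a (+) b).
Proof. by case: a; case: b => //=; rewrite addr0. Qed.

Definition isbal (x : S) := match x with SPos _ | SNeg _ => false | _ => true end.

Lemma sbalancedP x : sbalanced x <-> isbal x.
Proof.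
split.
  by case=> [[|a|a|a]] -> //=; rewrite dltxx.
case: x => //= [_|a _]; first by exists SZero.
by exists (SBal a) => /=; rewrite dltxx.
Qed.

Lemma bal_opp (x : S) : x = sopp x -> isbal x.
Proof. by case: x. Qed.

Lemma isbal_opp (x : S) : isbal (sopp x) = isbal x.
Proof. by case: x. Qed.

Lemma expand_cof n (M : 'M[S]_n.+1) (i0 j0 : 'I_n.+1) :
  smul (ssign_nat (i0 + j0)) (sdet (row' i0 (col' j0 M))) =
  \big[sadd/SZero]_(s : 'S_n.+1 | s i0 == j0)
     smul (ssign_perm s) (\big[smul/sone G]_(k | i0 != k) M k (s k)).
Proof.
rewrite (reindex (lift_perm i0 j0)); last first.
  pose ulsf i (s : 'S_n.+1) k := odflt k (unlift (s i) (s (lift i k))).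
  have ulsfK i (s : 'S_n.+1) k: lift (s i) (ulsf i s k) = s (lift i k).
    rewrite /ulsf; have:= neq_lift i k.
    by rewrite -(can_eq (permK s)) => /unlift_some[] ? ? ->.
  have inj_ulsf: injective (ulsf i0 _).
    move=> s; apply: can_inj (ulsf (s i0) s^-1%g) _ => k'.
    by rewrite {1}/ulsf ulsfK !permK liftK.
  exists (fun s => perm (inj_ulsf s)) => [s _ | s].
    by apply/permP=> k'; rewrite permE /ulsf lift_perm_lift lift_perm_id liftK.
  move/(s _ =P _) => si0; apply/permP=> k.
  case: (unliftP i0 k) => [k'|] ->; rewrite ?lift_perm_id //.
  by rewrite lift_perm_lift -si0 permE ulsfK.
rewrite /sdet smul_sumr /=.
apply: eq_big => [s | s _]; first by rewrite lift_perm_id eqxx.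
rewrite smulA.
have -> : smul (ssign_nat (i0 + j0)) (ssign_perm s) = ssign_perm (lift_perm i0 j0 s).
  change (smul (sgnb (odd (i0 + j0))) (sgnb (odd_perm s)) =
          sgnb (odd_perm (lift_perm i0 j0 s))).
  by rewrite sgnbM odd_lift_perm oddD.
congr smul.
case: (pickP 'I_n) => [k0 _ | n0]; last first.
  by rewrite !big1 // => [j /unlift_some[i] | i _]; have:= n0 i.
rewrite (reindex (lift i0)).
  by apply: eq_big => [k | k _] /=; rewrite ?neq_lift // !mxE lift_perm_lift.
exists (fun k => odflt k0 (unlift i0 k)) => k; first by rewrite liftK.
by case/unlift_some=> k' -> ->.
Qed.

Lemma laplace_gen n (M : 'M[S]_n.+1) (j : 'I_n.+1) (c : 'I_n.+1 -> S) :
  \big[sadd/SZero]_k smul (c k) (smul (ssign_nat (k + j)) (sdet (row' j (col' k M))))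
  = \big[sadd/SZero]_(s : 'S_n.+1)
      smul (c (s j)) (smul (ssign_perm s) (\big[smul/sone G]_(l | j != l) M l (s l))).
Proof.
rewrite (partition_big (fun s : 'S_n.+1 => s j) predT) //=.
apply: eq_bigr => k _.
rewrite addnC expand_cof smul_sumr.
by apply: eq_bigr => s /eqP <-.
Qed.

Lemma diag_case n (M : 'M[S]_n.+1) (j : 'I_n.+1) :
  \big[sadd/SZero]_(s : 'S_n.+1)
      smul (M j (s j)) (smul (ssign_perm s) (\big[smul/sone G]_(l | j != l) M l (s l)))
  = sdet M.
Proof.
apply: eq_bigr => s _.
rewrite smulCA [in RHS](bigD1 j) //=; congr smul; congr smul.
by apply: eq_bigl => l; rewrite eq_sym.
Qed.

Lemma offdiag_case n (M : 'M[S]_n.+1) (i j : 'I_n.+1) : i != j ->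
  isbal (\big[sadd/SZero]_(s : 'S_n.+1)
      smul (M i (s j)) (smul (ssign_perm s) (\big[smul/sone G]_(l | j != l) M l (s l)))).
Proof.
move=> nij; apply: bal_opp.
set F := fun s : 'S_n.+1 => _.
rewrite sopp_sum (reindex_inj (mulgI (tperm i j))) /=.
apply: eq_bigr => s _; rewrite /F.
rewrite permM tpermR.
have -> : ssign_perm (tperm i j * s) = sopp (ssign_perm s).
  change (sgnb (odd_perm (tperm i j * s)) = sopp (sgnb (odd_perm s))).
  by rewrite odd_permM odd_tperm nij; case: (odd_perm s); rewrite //= soppK.
rewrite (bigD1 i) 1?eq_sym //= [in RHS](bigD1 i) 1?eq_sym //=.
rewrite permM tpermL.
rewrite (eq_bigr (fun l => M l (s l))); last first.
  move=> l /andP[jl li]; rewrite permM tpermD // eq_sym //.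
rewrite smulN smulNr; congr sopp.
by rewrite [LHS]smulCA [RHS]smulCA; congr smul; apply: smulCA.
Qed.

End Det.
Theorem proposition3p35 (G : doag) (n : nat) (A : 'M[smax G]_n) (g : smax G) :
  s_eigenvalue A g ->
  let B := ssubmx (sscalemx g (sidmx n)) A in
  mxnabla (smulmx A (sadj B)) (sscalemx g (sadj B)).
Proof.
case: n A => [|n] A [_ hdet] B i j; first by case: i.
have key : isbal ((smulmx B (sadj B)) i j).
  rewrite mxE (eq_bigr (fun k => smul (B i k) (smul (ssign_nat G (k + j))
            (sdet (row' j (col' k B)))))); last by move=> k _; rewrite /sadj mxE.
  rewrite (laplace_gen B j (B i)).
  case: (eqVneq i j) => [<-|nij]; last exact: offdiag_case.
  rewrite diag_case.
  by move: hdet; rewrite /snabla /= adds0 => /sbalancedP.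
move: key; move: (sadj B) => D key.
have E : (smulmx B D) i j = sadd (smul g (D i j)) (sopp ((smulmx A D) i j)).
  rewrite !mxE sopp_sum.
  have EB k : B i k = sadd (smul g (if i == k then sone G else SZero)) (sopp (A i k)).
    by rewrite /B /ssubmx /sscalemx /sidmx !mxE.
  rewrite [LHS](eq_bigr (fun k => sadd (smul g (smul (if i == k then sone G else SZero)
      (D k j))) (sopp (smul (A i k) (D k j))))); last first.
    by move=> k _; rewrite EB smulDl smulN smulA.
  rewrite big_split /=; congr sadd.
  rewrite (bigD1 i) //= eqxx mul1s big1 ?adds0 // => k nki.
  by rewrite eq_sym (negbTE nki) /= smul0.
rewrite /snabla; apply/sbalancedP; rewrite [sscalemx _ _ _ _]mxE.
by rewrite -isbal_opp soppD soppK saddC -E.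
Qed.
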